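(* Let $n\in\mathbb N$. For any $K\in\mathcal S_n\setminus\{\emptyset,\mathbb R^n\}$ we have \[ 2\le\mathrm{diam}(K)+\mathrm{diam}(K^c)\le 2\sqrt2. \] Moreover, if $\mathrm{diam}(K)=d$ then $2-d\le\mathrm{diam}(K^c)\le\sqrt{4-d^2}$.
   Context: $B(x,r)$ is the closed Euclidean ball. For $A\subseteq\mathbb R^n$, $A^c=\bigcap_{x\in A}B(x,1)$. $\mathcal S_n$ is the class of all sets of the form $\bigcap_{x\in A}B(x,1)$, $A\subseteq\mathbb R^n$ (including $\emptyset$ and $\mathbb R^n$). $\mathrm{diam}(A)=\sup\{\|x-y\|_2:x,y\in A\}$. *)

(* Defs.v *)
From HB Require Import structures.
From mathcomp Require Import all_boot all_order all_algebra.
From mathcomp Require Import classical_sets reals.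
Set Implicit Arguments. Unset Strict Implicit. Unset Printing Implicit Defensive.
Import Order.TTheory GRing.Theory Num.Theory.
Local Open Scope classical_set_scope.
Local Open Scope ring_scope.

Section Defs.
Variables (R : realType) (n : nat).

Definition enorm (x : 'rV[R]_n) : R := Num.sqrt (\sum_(i < n) x 0 i ^+ 2).

Definition cball (x : 'rV[R]_n) (r : R) : set 'rV[R]_n :=
  [set y | enorm (y - x) <= r].

(* A^c = intersection of the unit balls centred at points of A (R^n if A empty) *)
Definition bcomp (A : set 'rV[R]_n) : set 'rV[R]_n :=
  \bigcap_(x in A) cball x 1.

Definition in_Sn (K : set 'rV[R]_n) : Prop := exists A, K = bcomp A.

Definition diam (A : set 'rV[R]_n) : R :=
  sup [set d | exists x y, A x /\ A y /\ d = enorm (x - y)].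

End Defs.

(* Main.v *)
Require Import Defs.
From HB Require Import structures.
From mathcomp Require Import all_boot all_order all_algebra.
From mathcomp Require Import classical_sets reals.
From mathcomp Require Import ring lra.
From Stdlib Require Import Classical.
Import Order.TTheory GRing.Theory Num.Theory.
Local Open Scope classical_set_scope.
Local Open Scope ring_scope.
Definition sq {R : realType} {n} (x : 'rV[R]_n) : R := \sum_(i < n) x 0 i ^+ 2.
Definition dot {R : realType} {n} (x y : 'rV[R]_n) : R := \sum_(i < n) x 0 i * y 0 i.

Lemma enormE {R : realType} {n} (x : 'rV[R]_n) : enorm x = Num.sqrt (sq x).
Proof. by []. Qed.

Lemma sq_ge0 {R : realType} {n} (x : 'rV[R]_n) : 0 <= sq x.
Proof. by apply: sumr_ge0 => i _; rewrite sqr_ge0. Qed.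

Lemma enorm_ge0 {R : realType} {n} (x : 'rV[R]_n) : 0 <= enorm x.
Proof. exact: sqrtr_ge0. Qed.

Lemma enorm_sq {R : realType} {n} (x : 'rV[R]_n) : enorm x ^+ 2 = sq x.
Proof. by rewrite enormE sqr_sqrtr // sq_ge0. Qed.

Lemma sq_lin {R : realType} {n} (x y : 'rV[R]_n) (a b : R) :
  \sum_(i < n) (a * x 0 i + b * y 0 i) ^+ 2 =
  a ^+ 2 * sq x + 2 * a * b * dot x y + b ^+ 2 * sq y.
Proof.
rewrite /sq /dot !mulr_sumr -!big_split /=; apply: eq_bigr => i _; ring.
Qed.

Lemma sqZ {R : realType} {n} (x : 'rV[R]_n) (c : R) : sq (c *: x) = c ^+ 2 * sq x.
Proof. rewrite /sq mulr_sumr; apply: eq_bigr => i _; rewrite mxE; ring. Qed.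

Lemma enormZ {R : realType} {n} (x : 'rV[R]_n) (c : R) : enorm (c *: x) = `|c| * enorm x.
Proof. by rewrite !enormE sqZ sqrtrM ?sqr_ge0 // sqrtr_sqr. Qed.

Lemma sqN {R : realType} {n} (x : 'rV[R]_n) : sq (- x) = sq x.
Proof. by rewrite -scaleN1r sqZ sqrrN expr1n mul1r. Qed.

Lemma enormN {R : realType} {n} (x : 'rV[R]_n) : enorm (- x) = enorm x.
Proof. by rewrite !enormE sqN. Qed.

Lemma enormB {R : realType} {n} (x y : 'rV[R]_n) : enorm (x - y) = enorm (y - x).
Proof. by rewrite -enormN opprB. Qed.

Lemma sq0_entries {R : realType} {n} (x : 'rV[R]_n) : sq x = 0 -> x = 0.
Proof.
move=> h; apply/matrixP => i j; rewrite (ord1 i) mxE.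
have := @psumr_eq0P _ _ _ (fun i : 'I_n => x 0 i ^+ 2) (fun i _ => sqr_ge0 _) h j isT.
by move/eqP; rewrite sqrf_eq0 => /eqP.
Qed.

Lemma enorm_eq0 {R : realType} {n} (x : 'rV[R]_n) : enorm x = 0 -> x = 0.
Proof.
move=> h; apply: sq0_entries; by rewrite -enorm_sq h expr0n.
Qed.

Lemma dot0 {R : realType} {n} (y : 'rV[R]_n) : dot 0 y = 0.
Proof. by rewrite /dot big1 // => i _; rewrite mxE mul0r. Qed.

Lemma dotC {R : realType} {n} (x y : 'rV[R]_n) : dot x y = dot y x.
Proof. by apply: eq_bigr => i _; rewrite mulrC. Qed.

Lemma cauchy_schwarz {R : realType} {n} (x y : 'rV[R]_n) :
  dot x y <= enorm x * enorm y.
Proof.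
set a := enorm x; set b := enorm y.
have a0 : 0 <= a by apply: enorm_ge0.
have b0 : 0 <= b by apply: enorm_ge0.
have [ab0|] := eqVneq (a * b) 0.
  move/eqP: ab0; rewrite mulf_eq0 => /orP[] /eqP h.
    have -> : dot x y = 0 by rewrite (enorm_eq0 _ h) dot0.
    by rewrite h mul0r.
  have -> : dot x y = 0 by rewrite dotC (enorm_eq0 _ h) dot0.
  by rewrite h mulr0.
move=> abn0.
have abp : 0 < a * b by rewrite lt0r abn0 mulr_ge0.
have : 0 <= \sum_(i < n) (b * x 0 i + (- a) * y 0 i) ^+ 2 by apply: sumr_ge0 => i _; apply: sqr_ge0.
rewrite sq_lin -!enorm_sq -/a -/b => h.
have h2 : 0 <= 2 * (a * b) * (a * b - dot x y).
  suff -> : 2 * (a * b) * (a * b - dot x y) = b ^+ 2 * a ^+ 2 + 2 * b * (- a) * dot x y + (- a) ^+ 2 * b ^+ 2 by [].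
  ring.
rewrite -subr_ge0; move: h2; rewrite pmulr_rge0 // mulr_gt0 //.
Qed.

Lemma enorm_triangle {R : realType} {n} (x y : 'rV[R]_n) :
  enorm (x + y) <= enorm x + enorm y.
Proof.
have e : sq (x + y) = sq x + 2 * dot x y + sq y.
  rewrite /sq /dot mulr_sumr -!big_split /=; apply: eq_bigr => i _; rewrite mxE; ring.
rewrite enormE -(ger0_norm (addr_ge0 (enorm_ge0 x) (enorm_ge0 y))) -sqrtr_sqr ler_sqrt ?sqr_ge0 //.
rewrite e sqrrD !enorm_sq lerD2r lerD2l.
have := cauchy_schwarz x y; lra.
Qed.

Lemma vec_sub_split {R : realType} {n} (x y q : 'rV[R]_n) : x - y = (x - q) + (q - y).
Proof. by rewrite addrA subrK. Qed.

Lemma enorm_le_split {R : realType} {n} (x y q : 'rV[R]_n) :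
  enorm (x - y) <= enorm (x - q) + enorm (q - y).
Proof. rewrite (vec_sub_split x y q); exact: enorm_triangle. Qed.

Lemma enorm0 {R : realType} {n} : enorm (0 : 'rV[R]_n) = 0.
Proof. by rewrite enormE /sq big1 ?sqrtr0 // => i _; rewrite mxE expr0n. Qed.

Lemma extend {R : realType} {n} (n0 : (0 < n)%N) (x y : 'rV[R]_n) (t : R) :
  0 <= t -> exists w, enorm w = 1 /\ enorm (y + t *: w - x) = enorm (y - x) + t.
Proof.
move=> t0.
have [->|nxy] := eqVneq y x.
  pose i0 : 'I_n := Ordinal n0.
  have he : enorm (delta_mx 0 i0 : 'rV[R]_n) = 1.
    rewrite enormE /sq (bigD1 i0) //= big1 ?addr0 ?mxE ?eqxx ?expr1n ?sqrtr1 //.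
    by move=> j /negbTE hj; rewrite mxE hj andbF expr0n.
  exists (delta_mx 0 i0); split => //.
  have -> : x + t *: delta_mx 0 i0 - x = t *: delta_mx 0 i0 by rewrite addrC addKr.
  by rewrite subrr enorm0 add0r enormZ ger0_norm // he mulr1.
set a := enorm (y - x).
have a0 : 0 < a.
  rewrite lt0r enorm_ge0 andbT; apply/eqP => /enorm_eq0 /eqP; rewrite subr_eq0.
  by rewrite (negbTE nxy).
exists (a^-1 *: (y - x)); split.
  rewrite enormZ -/a ger0_norm ?invr_ge0 ?(ltW a0) //. apply: mulVf. by rewrite gt_eqF.
have -> : y + t *: (a^-1 *: (y - x)) - x = (1 + t / a) *: (y - x).
  by rewrite scalerDl scale1r scalerA addrAC.
rewrite enormZ -/a ger0_norm; last by rewrite addr_ge0 // divr_ge0 // ltW.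
by rewrite mulrDl mul1r divfK // gt_eqF.
Qed.

Definition DS {R : realType} {n} (P : set 'rV[R]_n) :=
  [set d | exists x y, P x /\ P y /\ d = enorm (x - y)].

Lemma diamE {R : realType} {n} (P : set 'rV[R]_n) : diam P = sup (DS P).
Proof. by []. Qed.

Lemma DS_has_sup {R : realType} {n} {P : set 'rV[R]_n} {c : R} {x0} :
  P x0 -> (forall x y, P x -> P y -> enorm (x - y) <= c) -> has_sup (DS P).
Proof.
move=> Px0 hc; split; first by exists (enorm (x0 - x0)), x0, x0.
by exists c => r [x [y [Px [Py ->]]]]; apply: hc.
Qed.

Lemma diam_ub {R : realType} {n} {P : set 'rV[R]_n} {x y} :
  has_sup (DS P) -> P x -> P y -> enorm (x - y) <= diam P.
Proof. by move=> hs Px Py; apply: (sup_upper_bound hs); exists x, y. Qed.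

Lemma diam_le {R : realType} {n} {P : set 'rV[R]_n} {c : R} {x0} :
  P x0 -> (forall x y, P x -> P y -> enorm (x - y) <= c) -> diam P <= c.
Proof.
move=> Px0 hc; apply: ge_sup; first by exists (enorm (x0 - x0)), x0, x0.
by move=> r [x [y [Px [Py ->]]]]; apply: hc.
Qed.

Lemma diam_ge0 {R : realType} {n} {P : set 'rV[R]_n} {x0} :
  has_sup (DS P) -> P x0 -> 0 <= diam P.
Proof. by move=> hs Px; rewrite -(@enorm0 R n) -(subrr x0); apply: diam_ub. Qed.

Definition dualp {R : realType} {n} (P Q : set 'rV[R]_n) :=
  [/\ forall x y, P x -> Q y -> enorm (x - y) <= 1,
      forall y, (forall x, P x -> enorm (y - x) <= 1) -> Q y &
      forall x, (forall y, Q y -> enorm (x - y) <= 1) -> P x].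

Lemma dualp_sym {R : realType} {n} (P Q : set 'rV[R]_n) : dualp P Q -> dualp Q P.
Proof.
case=> h1 h2 h3; split => //.
by move=> x y Qx Py; rewrite enormB; apply: h1.
Qed.

Lemma dual_bound {R : realType} {n} {P Q : set 'rV[R]_n} {q} :
  dualp P Q -> Q q -> forall x y, P x -> P y -> enorm (x - y) <= 2.
Proof.
case=> h1 _ _ Qq x y Px Py.
apply: le_trans (enorm_le_split x y q) _.
have := h1 _ _ Px Qq; have := h1 _ _ Py Qq; rewrite (enormB y q); lra.
Qed.

Lemma dual_has_sup {R : realType} {n} {P Q : set 'rV[R]_n} {p q} :
  dualp P Q -> P p -> Q q -> has_sup (DS P).
Proof. move=> hd Pp Qq; exact: (DS_has_sup Pp (dual_bound hd Qq)). Qed.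

Lemma sq_euler {R : realType} {n} (x1 x2 y1 y2 : 'rV[R]_n) :
  sq (x1 - x2) + sq (y1 - y2) + sq (x1 + x2 - y1 - y2) =
  sq (x1 - y1) + sq (x1 - y2) + sq (x2 - y1) + sq (x2 - y2).
Proof. rewrite /sq -!big_split /=; apply: eq_bigr => i _; rewrite !mxE; ring. Qed.

Lemma euler_bound {R : realType} {n} {P Q : set 'rV[R]_n} {x1 x2 y1 y2} :
  dualp P Q -> P x1 -> P x2 -> Q y1 -> Q y2 ->
  enorm (x1 - x2) ^+ 2 + enorm (y1 - y2) ^+ 2 <= 4.
Proof.
case=> h1 _ _ P1 P2 Q1 Q2.
have sq1 : forall x y, P x -> Q y -> sq (x - y) <= 1.
  move=> x y Px Qy; rewrite -enorm_sq; have := h1 _ _ Px Qy; have := enorm_ge0 (x - y).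
  move=> a b; rewrite expr2; nra.
rewrite !enorm_sq.
have := sq_euler x1 x2 y1 y2; have := sq_ge0 (x1 + x2 - y1 - y2).
have := sq1 _ _ P1 Q1; have := sq1 _ _ P1 Q2; have := sq1 _ _ P2 Q1; have := sq1 _ _ P2 Q2.
lra.
Qed.

Lemma sqrt_ge_of {R : realType} (e s : R) : 0 <= e -> e ^+ 2 <= s -> e <= Num.sqrt s.
Proof.
move=> e0 h; rewrite -(ger0_norm e0) -sqrtr_sqr ler_sqrt //.
exact: le_trans (sqr_ge0 e) h.
Qed.

Lemma sq_le_of_sqrt {R : realType} (d s : R) : 0 <= d -> 0 <= s -> d <= Num.sqrt s -> d ^+ 2 <= s.
Proof.
move=> hd0 s0 h; rewrite -(sqr_sqrtr s0) !expr2.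
by apply: ler_pM.
Qed.

Lemma dual_d2 {R : realType} {n} {P Q : set 'rV[R]_n} {p q} :
  dualp P Q -> P p -> Q q ->
  diam Q <= Num.sqrt (4 - diam P ^+ 2) /\ diam P ^+ 2 <= 4.
Proof.
move=> hd Pp Qq.
have hsP := dual_has_sup hd Pp Qq.
have d0 := diam_ge0 hsP Pp.
have key : forall y1 y2, Q y1 -> Q y2 -> enorm (y1 - y2) ^+ 2 <= 4 - diam P ^+ 2.
  move=> y1 y2 Q1 Q2.
  have e4 : 0 <= 4 - enorm (y1 - y2) ^+ 2.
    by have := euler_bound hd Pp Pp Q1 Q2; rewrite subrr enorm0 expr0n /=; lra.
  have : diam P <= Num.sqrt (4 - enorm (y1 - y2) ^+ 2).
    apply: (diam_le Pp) => x1 x2 P1 P2; apply: sqrt_ge_of; first exact: enorm_ge0.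
    by have := euler_bound hd P1 P2 Q1 Q2; lra.
  move/(sq_le_of_sqrt _ _ d0 e4); lra.
have k0 := key q q Qq Qq; rewrite subrr enorm0 expr0n /= in k0.
split; last by lra.
apply: (diam_le Qq) => y1 y2 Q1 Q2; apply: sqrt_ge_of; first exact: enorm_ge0.
exact: key.
Qed.

Lemma cross_sup {R : realType} {n} (n0 : (0 < n)%N) {P Q : set 'rV[R]_n} {p q} :
  dualp P Q -> P p -> Q q ->
  forall eps, 0 < eps -> exists x y, [/\ P x, Q y & 1 - eps < enorm (y - x)].
Proof.
move=> hd Pp Qq eps eps0.
have [h1 h2 h3] := hd.
pose T := [set r | exists x y, P x /\ Q y /\ r = enorm (y - x)].
have hT : has_sup T.
  split; first by exists (enorm (q - p)), p, q.
  by exists 1 => r [x [y [Px [Qy ->]]]]; rewrite enormB; apply: h1.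
have Tub : forall x y, P x -> Q y -> enorm (y - x) <= sup T.
  by move=> x y Px Qy; apply: (sup_upper_bound hT); exists x, y.
have s1 : 1 <= sup T.
  rewrite leNgt; apply/negP => hlt.
  set eta := 1 - sup T.
  have eta0 : 0 < eta by rewrite subr_gt0.
  have : sup T <= sup T - eta.
    apply: ge_sup; first by exists (enorm (q - p)), p, q.
    move=> r [x [y [Px [Qy ->]]]].
    have [w [w1 hw]] := extend n0 x y _ (ltW eta0).
    have Qz : Q (y + eta *: w).
      apply: h2 => x' Px'.
      have -> : y + eta *: w - x' = eta *: w + (y - x') by rewrite addrAC addrC.
      apply: le_trans (enorm_triangle _ _) _.
      rewrite enormZ w1 mulr1 ger0_norm ?(ltW eta0) //.
      have := Tub _ _ Px' Qy; rewrite /eta; lra.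
    have := Tub _ _ Px Qz; rewrite hw; lra.
  lra.
have [r [x [y [Px [Qy ->]]]] hr] := sup_adherent eps0 hT.
exists x, y; split => //; lra.
Qed.

Lemma dual_lower {R : realType} {n} (n0 : (0 < n)%N) {P Q : set 'rV[R]_n} {p q} :
  dualp P Q -> P p -> Q q -> diam P <= 1 -> 2 - diam P <= diam Q.
Proof.
move=> hd Pp Qq d1.
have [h1 h2 h3] := hd.
have hsP := dual_has_sup hd Pp Qq.
have hsQ := dual_has_sup (dualp_sym _ _ hd) Qq Pp.
apply/ler_addgt0Pr => eps eps0.
have [x [y [Px Qy hxy]]] := cross_sup n0 hd Pp Qq _ eps0.
have t0 : 0 <= 1 - diam P by lra.
have [w [w1 hw]] := extend n0 y x _ t0.
have Qz : Q (x + (1 - diam P) *: w).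
  apply: h2 => x' Px'.
  have -> : x + (1 - diam P) *: w - x' = (1 - diam P) *: w + (x - x') by rewrite addrAC addrC.
  apply: le_trans (enorm_triangle _ _) _.
  rewrite enormZ w1 mulr1 ger0_norm //.
  have := diam_ub hsP Px Px'; lra.
have := diam_ub hsQ Qz Qy; rewrite hw enormB; lra.
Qed.

Theorem theorem3p8 (R : realType) (n : nat) (K : set 'rV[R]_n) :
  in_Sn K -> K <> set0 -> K <> setT ->
  [/\ 2 <= diam K + diam (bcomp K),
      diam K + diam (bcomp K) <= 2 * Num.sqrt 2 &
      forall d : R, diam K = d ->
        2 - d <= diam (bcomp K) /\ diam (bcomp K) <= Num.sqrt (4 - d ^+ 2)].
Proof.
move=> [A hKA] hK0 hKT.
have [k Kk] : exists k, K k.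
  apply: NNPP => hn; apply: hK0; apply/seteqP; split => x // Kx; apply: hn; by exists x.
have [v nKv] : exists v, ~ K v.
  apply: NNPP => hn; apply: hKT; apply/seteqP; split => x // _.
  by apply: NNPP => nk; apply: hn; exists x.
have [a Aa] : exists a, A a.
  apply: NNPP => hn; apply: nKv; rewrite hKA => x Ax; exfalso; apply: hn; by exists x.
have n0 : (0 < n)%N.
  rewrite lt0n; apply/negP => /eqP n_eq; apply: nKv.
  have -> : v = k by apply/matrixP => i j; exfalso; case: j => m; rewrite n_eq.
  exact: Kk.
set L := bcomp K.
have AL : L a.
  move=> x Kx; rewrite /cball /=; rewrite enormB; move: Kx; rewrite hKA; exact.
have hd : dualp K L.
  split.
  - by move=> x y Kx Ly; rewrite enormB; apply: Ly.
  - by move=> y hy x Kx; apply: hy.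
  - move=> x hx; rewrite hKA => y Ay; rewrite /cball /=.
    apply: hx => z Kz; rewrite /cball /= enormB; move: Kz; rewrite hKA; exact.
have hsK := dual_has_sup hd Kk AL.
have hsL := dual_has_sup (dualp_sym _ _ hd) AL Kk.
have d0 := diam_ge0 hsK Kk.
have D0 := diam_ge0 hsL AL.
have [hup d4] := dual_d2 hd Kk AL.
have low : 2 - diam K <= diam L.
  have [d1|d1] := leP (diam K) 1; first by have := dual_lower n0 hd Kk AL; apply.
  have [D1|D1] := leP (diam L) 1.
    have := dual_lower n0 (dualp_sym _ _ hd) AL Kk D1; lra.
  lra.
have sq4 : diam L ^+ 2 <= 4 - diam K ^+ 2.
  apply: sq_le_of_sqrt => //; lra.
have s2 := sqr_sqrtr (ler0n R 2).
have s0 := sqrtr_ge0 (2%:R : R).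
split.
- lra.
- have h8 : (diam K + diam L) ^+ 2 <= 2 ^+ 2 * 2.
    have := sqr_ge0 (diam K - diam L); move: sq4; rewrite !expr2 => sq4 hh; nra.
  apply: le_trans (sqrt_ge_of _ _ (addr_ge0 d0 D0) h8) _.
  by rewrite sqrtrM ?sqr_ge0 // sqrtr_sqr ger0_norm.
- by move=> d <-; split.
Qed.
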